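(* Assume the standing assumptions below, let $\gamma\in[0,\gamma_* )$ and let $U(\cdot;\gamma)$ be the finite wavefront with speed $c(\gamma)$. Let $\phi_{c(\gamma)}$ denote the flux $|(U^m)'|^{p-1}$ written as a function of the value $U\in(0,1)$ along the wavefront. Then, as $U\to1^-$, $$\phi_{c(\gamma)}(U)=C_{p,\gamma}(1-U)^{\mu_{p,\gamma}}(1+o(1)),$$ where $\mu_{p,\gamma}=p-1$ and $C_{p,\gamma}=(m|h'(1)|/c(\gamma))^{p-1}$ if $p>2$; $\mu_{p,\gamma}=1$ and $C_{p,\gamma}=\frac{-(c(\gamma)+\gamma m)+\sqrt{(c(\gamma)+\gamma m)^2+4m|h'(1)|}}{2}$ if $p=2$; and $\mu_{p,\gamma}=1$, $C_{p,\gamma}=|h'(1)|/\gamma$ if $p\in(1,2)$ and $\gamma>0$.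
   Context: Standing assumptions: $m>0$, $p>1$ with $m(p-1)>1$. $h\in C^1([0,\infty))$ satisfies $h(0)=0$, and for some $a\in[0,1)$: $h\le0$ on $[0,a]$, $h>0$ on $(a,1)$, $h<0$ on $(1,\infty)$, $h'(1)<0$; if $a>0$ also $\int_0^1h(u)u^{m-1}du>0$. For $\gamma\in[0,\gamma_* )$ ($\gamma_*>0$ small), $c(\gamma)>0$ denotes the unique speed for which the one-dimensional equation $u_t=(|(u^m)_r|^{p-2}(u^m)_r)_r+\gamma|(u^m)_r|^{p-2}(u^m)_r+h(u)$ has a finite wavefront, i.e. a travelling wave $U(r-ct)$ with $U$ continuous, nonincreasing, $U(-\infty)=1$, $U=0$ on some $[\xi_0,\infty)$ and $U>0$ on $(-\infty,\xi_0)$; it is unique up to translation. *)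

(* Defs.v *)
From Stdlib Require Import Reals Lra.
From Coquelicot Require Import Coquelicot.
Open Scope R_scope.

(* x^y for x >= 0 with the convention 0^y = 0 (used with y > 0 only). *)
Definition spow (x y : R) : R := if Rle_dec x 0 then 0 else Rpower x y.

(* |s|^(p-2) s, with value 0 at s = 0. *)
Definition pflux (p s : R) : R :=
  if Rlt_dec 0 s then Rpower s (p - 1)
  else if Rlt_dec s 0 then - Rpower (- s) (p - 1) else 0.

Definition standing_h (m a : R) (h : R -> R) : Prop :=
  h 0 = 0 /\
  (forall x, 0 <= x -> ex_derive h x) /\
  (forall x, 0 <= x ->
     filterlim (Derive h) (within (fun y => 0 <= y) (locally x)) (locally (Derive h x))) /\
  0 <= a < 1 /\
  (forall u, 0 <= u <= a -> h u <= 0) /\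
  (forall u, a < u < 1 -> 0 < h u) /\
  (forall u, 1 < u -> h u < 0) /\
  Derive h 1 < 0 /\
  (0 < a -> 0 < RInt (fun u => h u * Rpower u (m - 1)) 0 1).

(* U is a finite wavefront with speed c for
   u_t = (|(u^m)_r|^{p-2}(u^m)_r)_r + gam |(u^m)_r|^{p-2}(u^m)_r + h(u),
   i.e. with V = U^m and F = |V'|^{p-2} V' the profile equation
   -c U' = F' + gam F + h(U) holds where U > 0, and the flux V' is continuous
   on R (so it vanishes at the front). *)
Definition finite_wavefront (m p gam : R) (h : R -> R) (c : R) (U : R -> R) : Prop :=
  (forall x, continuous U x) /\
  (forall x y, x <= y -> U y <= U x) /\
  is_lim U m_infty 1 /\
  (forall x, ex_derive (fun y => spow (U y) m) x) /\
  (forall x, continuous (Derive (fun y => spow (U y) m)) x) /\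
  exists xi0 : R,
    (forall x, xi0 <= x -> U x = 0) /\
    (forall x, x < xi0 -> 0 < U x) /\
    (forall x, x < xi0 ->
       ex_derive U x /\
       ex_derive (fun y => pflux p (Derive (fun z => spow (U z) m) y)) x /\
       - c * Derive U x =
         Derive (fun y => pflux p (Derive (fun z => spow (U z) m) y)) x
         + gam * pflux p (Derive (fun z => spow (U z) m) x)
         + h (U x)).

Definition flux_asymp (m p : R) (U : R -> R) (C mu : R) : Prop :=
  forall eps, 0 < eps -> exists delta, 0 < delta /\
    forall x, 1 - delta < U x < 1 ->
      Rabs (spow (Rabs (Derive (fun y => spow (U y) m) x)) (p - 1)
            - C * Rpower (1 - U x) mu)
      <= eps * (C * Rpower (1 - U x) mu).

(* Main.v *)
Require Import Defs.
From Stdlib Require Import Reals Lra.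
From Coquelicot Require Import Coquelicot.
Open Scope R_scope.

Lemma cont_eps (g : R -> R) s : continuous g s ->
  forall eps, 0 < eps -> exists d, 0 < d /\ forall y, Rabs (y - s) < d -> Rabs (g y - g s) < eps.
Proof.
  intros Hc eps He.
  apply continuity_pt_filterlim in Hc.
  destruct (Hc eps He) as [d [Hd H]].
  exists d; split; auto. intros y Hy.
  destruct (Req_dec y s) as [->|Hne].
  - rewrite Rminus_eq_0, Rabs_R0; auto.
  - apply H. split; [split; [exact I|auto]|]. exact Hy.
Qed.

Lemma cont_of_derive (g : R -> R) x : ex_derive g x -> continuous g x.
Proof. intro H. exact (@ex_derive_continuous R_AbsRing R_NormedModule g x H). Qed.

Lemma deriv_pos_right (g : R -> R) x l : is_derive g x l -> 0 < l ->
  exists d, 0 < d /\ forall y, x < y < x + d -> g x < g y.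
Proof.
  intros H Hl. apply is_derive_Reals in H.
  destruct (H (l/2) ltac:(lra)) as [d Hd].
  exists d; split; [apply cond_pos|].
  intros y Hy. specialize (Hd (y - x) ltac:(lra)).
  assert (Habs : Rabs (y - x) < d) by (rewrite Rabs_pos_eq; lra).
  specialize (Hd Habs). replace (x + (y - x)) with y in Hd by ring.
  apply Rabs_def2 in Hd. destruct Hd as [H1 H2].
  assert (Hq : l/2 < (g y - g x)/(y-x)) by lra.
  apply Rmult_lt_compat_r with (r := y - x) in Hq; [|lra].
  replace ((g y - g x) / (y - x) * (y - x)) with (g y - g x) in Hq by (field; lra). nra.
Qed.

Lemma deriv_neg_right (g : R -> R) x l : is_derive g x l -> l < 0 ->
  exists d, 0 < d /\ forall y, x < y < x + d -> g y < g x.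
Proof.
  intros H Hl.
  assert (H' : is_derive (fun t => - g t) x (- l)) by exact (is_derive_opp g x l H).
  destruct (deriv_pos_right _ _ _ H' ltac:(lra)) as [d [Hd Hy]].
  exists d; split; auto. intros y Hy'. specialize (Hy y Hy'). lra.
Qed.

Lemma cross (g : R -> R) a b : a < b ->
  (forall x, a <= x <= b -> continuous g x) -> g a <= 0 -> 0 < g b ->
  (forall x, a <= x < b -> g x = 0 -> exists d, 0 < d /\ forall y, x < y < x + d -> g y < 0) ->
  False.
Proof.
  intros Hab Hc Ha Hb Hz.
  set (E := fun x => a <= x <= b /\ g x <= 0).
  assert (Hbd : bound E) by (exists b; intros x [Hx _]; lra).
  assert (Hne : exists x, E x) by (exists a; split; [lra|auto]).
  destruct (completeness E Hbd Hne) as [s [Hub Hlub]].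
  assert (Has : a <= s) by (apply Hub; split; [lra|auto]).
  assert (Hsb : s <= b) by (apply Hlub; intros x [Hx _]; lra).
  assert (Hgs : g s <= 0).
  { destruct (Rle_or_lt (g s) 0) as [|Hpos]; auto. exfalso.
    destruct (cont_eps g s (Hc s ltac:(lra)) (g s) Hpos) as [d [Hd Hd']].
    destruct (Classical_Prop.classic (exists e, E e /\ s - d/2 < e)) as [[e [He He']]|Hn].
    - assert (e <= s) by (apply Hub; auto).
      specialize (Hd' e ltac:(rewrite Rabs_left1; lra)).
      destruct He as [_ He]. apply Rabs_def2 in Hd'. lra.
    - assert (s <= s - d/2); [|lra].
      apply Hlub. intros x Hx. destruct (Rle_or_lt x (s - d/2)); auto.
      exfalso; apply Hn; exists x; auto. }
  assert (Hsb' : s < b) by (destruct (Req_dec s b); [subst; lra|lra]).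
  assert (Hgs0 : g s = 0).
  { destruct (Rle_or_lt 0 (g s)) as [|Hneg]; [lra|]. exfalso.
    destruct (cont_eps g s (Hc s ltac:(lra)) (- g s) ltac:(lra)) as [d [Hd Hd']].
    set (y := Rmin (s + d/2) b).
    assert (Hy1 : s < y) by (unfold y; apply Rmin_glb_lt; lra).
    assert (Hy2 : y <= b) by (unfold y; apply Rmin_r).
    assert (Hy3 : y <= s + d/2) by (unfold y; apply Rmin_l).
    specialize (Hd' y ltac:(rewrite Rabs_pos_eq; lra)). apply Rabs_def2 in Hd'.
    assert (y <= s) by (apply Hub; split; [lra|lra]). lra. }
  destruct (Hz s ltac:(lra) Hgs0) as [d [Hd Hd']].
  set (y := s + Rmin d (b - s) / 2).
  assert (Hm1 : 0 < Rmin d (b - s)) by (apply Rmin_glb_lt; lra).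
  assert (Hm2 : Rmin d (b - s) <= d) by apply Rmin_l.
  assert (Hm3 : Rmin d (b - s) <= b - s) by apply Rmin_r.
  specialize (Hd' y ltac:(unfold y; lra)).
  assert (y <= s) by (apply Hub; split; [unfold y; lra|lra]). unfold y in *; lra.
Qed.
Definition interv (P : R -> Prop) := forall x y t, P x -> P y -> x <= t <= y -> P t.

Lemma mvt_le (f : R -> R) a b : a < b ->
  (forall x, a <= x <= b -> ex_derive f x) ->
  exists t, a <= t <= b /\ f b - f a = Derive f t * (b - a).
Proof.
  intros Hab Hd.
  destruct (MVT_gen f a b (Derive f)) as [t [Ht Heq]].
  - intros x Hx. rewrite Rmin_left in Hx by lra. rewrite Rmax_right in Hx by lra.
    apply Derive_correct. apply Hd. lra.
  - intros x Hx. rewrite Rmin_left in Hx by lra. rewrite Rmax_right in Hx by lra.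
    apply continuity_pt_filterlim. apply cont_of_derive. apply Hd. lra.
  - rewrite Rmin_left in Ht by lra. rewrite Rmax_right in Ht by lra.
    exists t. split; auto.
Qed.

Lemma upper_barrier (P : R -> Prop) (g phi : R -> R) :
  interv P ->
  (forall x, P x -> ex_derive g x) ->
  (forall x, P x -> 0 <= g x -> Derive g x < 0) ->
  (forall x, P x -> g x <= phi x) ->
  (forall x eps, P x -> 0 < eps -> exists y, y <= x /\ P y /\ phi y < eps) ->
  forall x, P x -> g x <= 0.
Proof.
  intros HI Hd Hneg Hle Hlim x1 Px1.
  destruct (Rle_or_lt (g x1) 0) as [|Hg]; auto. exfalso.
  destruct (Hlim x1 (g x1) Px1 Hg) as [y [Hy [Py Hphi]]].
  destruct (Req_dec y x1) as [->|Hne].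
  { specialize (Hle x1 Px1). lra. }
  assert (Hpos : forall t, y <= t <= x1 -> 0 < g t).
  { intros t Ht. destruct (Rle_or_lt (g t) 0) as [Hgt|]; auto. exfalso.
    assert (Ht' : t < x1) by (destruct (Req_dec t x1); [subst; lra|lra]).
    apply (cross g t x1 Ht'); auto.
    - intros u Hu. apply cont_of_derive. apply Hd. apply (HI y x1); auto; lra.
    - intros u Hu Hu0.
      assert (Pu : P u) by (apply (HI y x1); auto; lra).
      destruct (deriv_neg_right g u (Derive g u) (Derive_correct _ _ (Hd u Pu))
                 (Hneg u Pu ltac:(lra))) as [d [Hd0 Hd1]].
      exists d; split; auto. intros v Hv. specialize (Hd1 v Hv). lra. }
  destruct (mvt_le g y x1 ltac:(lra)) as [t [Ht Heq]].
  { intros u Hu. apply Hd. apply (HI y x1); auto. }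
  assert (Pt : P t) by (apply (HI y x1); auto).
  specialize (Hneg t Pt ltac:(specialize (Hpos t Ht); lra)).
  specialize (Hle y Py).
  assert (Derive g t * (x1 - y) < 0) by (apply Rmult_neg_pos; lra). lra.
Qed.

Lemma lower_barrier (P : R -> Prop) (g z : R -> R) (eta B : R) :
  interv P -> 0 < eta -> 0 <= B ->
  (forall x, P x -> ex_derive g x) ->
  (forall x, P x -> ex_derive z x) ->
  (forall x, P x -> g x <= 0 -> 0 < Derive g x /\ eta * Derive z x <= Derive g x) ->
  (forall x, P x -> - B * z x <= g x) ->
  (forall x, P x -> 0 < z x) ->
  (forall x eps, P x -> 0 < eps -> exists y, y < x /\ P y /\ z y < eps) ->
  forall x, P x -> 0 <= g x.
Proof.
  intros HI He HB Hd Hdz Hpos Hlow Hz Hlim x1 Px1.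
  destruct (Rle_or_lt 0 (g x1)) as [|Hg]; auto. exfalso.
  assert (Hz1 := Hz x1 Px1).
  destruct (Hlim x1 (eta * z x1 / (eta + B)) Px1) as [y [Hy [Py Hzy]]].
  { apply Rdiv_lt_0_compat; nra. }
  assert (Hneg : forall t, y <= t <= x1 -> g t < 0).
  { intros t Ht. destruct (Rle_or_lt 0 (g t)) as [Hgt|]; auto. exfalso.
    assert (Ht' : t < x1) by (destruct (Req_dec t x1); [subst; lra|lra]).
    apply (cross (fun u => - g u) t x1 Ht'); try lra.
    - intros u Hu. apply (continuous_opp g). apply cont_of_derive. apply Hd. apply (HI y x1); auto; lra.
    - intros u Hu Hu0.
      assert (Pu : P u) by (apply (HI y x1); auto; lra).
      destruct (Hpos u Pu ltac:(lra)) as [Hp _].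
      destruct (deriv_pos_right g u (Derive g u) (Derive_correct _ _ (Hd u Pu)) Hp)
        as [d [Hd0 Hd1]].
      exists d; split; auto. intros v Hv. specialize (Hd1 v Hv). lra. }
  destruct (mvt_le (fun t => g t - eta * z t) y x1 ltac:(lra)) as [t [Ht Heq]].
  { intros u Hu. assert (Pu : P u) by (apply (HI y x1); auto).
    exact (ex_derive_minus g (fun t => eta * z t) u (Hd u Pu) (ex_derive_scal z eta u (Hdz u Pu))). }
  assert (Pt : P t) by (apply (HI y x1); auto).
  rewrite (Derive_minus g (fun t => eta * z t) t (Hd t Pt) (ex_derive_scal z eta t (Hdz t Pt))) in Heq.
  rewrite Derive_scal in Heq.
  destruct (Hpos t Pt ltac:(specialize (Hneg t Ht); lra)) as [_ Hge].
  assert (0 <= (Derive g t - eta * Derive z t) * (x1 - y)) by (apply Rmult_le_pos; lra).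
  specialize (Hlow y Py).
  assert (eta * z x1 - (eta + B) * z y > 0).
  { assert ((eta + B) * z y < eta * z x1); [|lra].
    apply Rmult_lt_compat_l with (r := eta + B) in Hzy; [|lra].
    replace ((eta + B) * (eta * z x1 / (eta + B))) with (eta * z x1) in Hzy by (field; lra).
    lra. }
  nra.
Qed.

Lemma div_le (a b c d : R) : 0 < b -> 0 < d -> a * d <= c * b -> a / b <= c / d.
Proof.
  intros Hb Hd H.
  assert (Heq : c / d - a / b = (c * b - a * d) / (b * d)) by (field; lra).
  assert (0 <= (c * b - a * d) / (b * d)).
  { apply Rmult_le_pos; [lra|]. apply Rlt_le, Rinv_0_lt_compat. nra. }
  lra.
Qed.

Lemma Rpower_pos x y : 0 < Rpower x y.
Proof. unfold Rpower. apply exp_pos. Qed.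

Lemma Rpower_1_base y : Rpower 1 y = 1.
Proof. unfold Rpower. rewrite ln_1, Rmult_0_r. apply exp_0. Qed.

Lemma spow_pos x y : 0 < x -> spow x y = Rpower x y.
Proof. intro H. unfold spow. destruct (Rle_dec x 0); [lra|auto]. Qed.

Lemma spow_nonpos x y : x <= 0 -> spow x y = 0.
Proof. intro H. unfold spow. destruct (Rle_dec x 0); [auto|lra]. Qed.

Lemma Rpower_inv_pow x r : 0 < x -> r <> 0 -> Rpower (Rpower x r) (/ r) = x.
Proof.
  intros Hx Hr. rewrite Rpower_mult. rewrite Rinv_r by auto. apply Rpower_1; auto.
Qed.

Lemma rpow_small r eps : 0 < r -> 0 < eps ->
  exists d, 0 < d /\ forall z, 0 < z < d -> Rpower z r < eps.
Proof.
  intros Hr He. exists (Rpower eps (/ r)). split; [apply Rpower_pos|].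
  intros z Hz.
  assert (Heq : Rpower (Rpower eps (/ r)) r = eps).
  { rewrite Rpower_mult. rewrite Rinv_l by lra. apply Rpower_1; auto. }
  rewrite <- Heq. apply Rlt_Rpower_l; auto.
Qed.

Lemma h_facts (m a : R) (h : R -> R) : standing_h m a h ->
  h 1 = 0 /\ Derive h 1 < 0 /\
  forall eta, 0 < eta -> exists d, 0 < d /\
    forall z, 0 < z < d -> Rabs (h (1 - z) + Derive h 1 * z) <= eta * z.
Proof.
  intros [H0 [Hd [Hdc [Ha [Hle [Hpos [Hneg [Hd1 _]]]]]]]].
  assert (Hc : continuous h 1) by (apply cont_of_derive; apply Hd; lra).
  assert (Hh1 : h 1 = 0).
  { destruct (Rtotal_order (h 1) 0) as [Hl|[He|Hg]]; auto; exfalso.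
    - destruct (cont_eps h 1 Hc (- h 1) ltac:(lra)) as [d [Hdd Hdd']].
      set (y := 1 - Rmin d (1 - a) / 2).
      assert (0 < Rmin d (1 - a)) by (apply Rmin_glb_lt; lra).
      assert (Rmin d (1 - a) <= d) by apply Rmin_l.
      assert (Rmin d (1 - a) <= 1 - a) by apply Rmin_r.
      specialize (Hdd' y ltac:(unfold y; rewrite Rabs_left1; lra)).
      specialize (Hpos y ltac:(unfold y; lra)).
      apply Rabs_def2 in Hdd'. lra.
    - destruct (cont_eps h 1 Hc (h 1) ltac:(lra)) as [d [Hdd Hdd']].
      specialize (Hdd' (1 + d/2) ltac:(rewrite Rabs_pos_eq; lra)).
      specialize (Hneg (1 + d/2) ltac:(lra)). apply Rabs_def2 in Hdd'. lra. }
  split; auto. split; auto.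
  intros eta He.
  assert (HD := Derive_correct h 1 (Hd 1 ltac:(lra))).
  apply is_derive_Reals in HD.
  destruct (HD eta He) as [d Hdl].
  exists d. split; [apply cond_pos|].
  intros z Hz.
  specialize (Hdl (- z) ltac:(lra) ltac:(rewrite Rabs_Ropp, Rabs_pos_eq; lra)).
  replace (1 + - z) with (1 - z) in Hdl by ring. rewrite Hh1, Rminus_0_r in Hdl.
  replace (h (1 - z) + Derive h 1 * z) with ((- z) * (h (1 - z) / - z - Derive h 1)) by (field; lra).
  rewrite Rabs_mult, Rabs_Ropp, (Rabs_pos_eq z) by lra. nra.
Qed.

Lemma rpow_near1 r : forall eta, 0 < eta -> exists d, 0 < d /\
  forall u, Rabs (u - 1) < d -> Rabs (Rpower u r - 1) < eta.
Proof.
  intros eta He.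
  assert (HD : is_derive (fun x => Rpower x r) 1 (r * Rpower 1 (r - 1))).
  { apply is_derive_Reals. apply derivable_pt_lim_power. lra. }
  assert (Hc : continuous (fun x => Rpower x r) 1).
  { apply cont_of_derive. eexists; eauto. }
  destruct (cont_eps _ 1 Hc eta He) as [d [Hd Hd']].
  exists d; split; auto. intros u Hu. specialize (Hd' u Hu). simpl in Hd'.
  rewrite Rpower_1_base in Hd'. auto.
Qed.

Definition setup (m p c gam : R) (h U phi w : R -> R) : Prop :=
  (forall x, continuous U x) /\
  (forall x y, x <= y -> U y <= U x) /\
  (forall x, U x <= 1) /\
  (forall eps, 0 < eps -> exists M, forall x, x < M -> 1 - eps < U x) /\
  (forall x, continuous w x) /\
  (forall x, U x = 1 -> w x = 0) /\
  (forall x, 0 < U x ->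
     ex_derive U x /\ ex_derive phi x /\ 0 <= w x /\
     Derive U x = - w x / (m * Rpower (U x) (m - 1)) /\
     Derive phi x = c * Derive U x - gam * phi x + h (U x) /\
     phi x = spow (w x) (p - 1)).

Lemma liminf_z m p c gam h U phi w : setup m p c gam h U phi w ->
  forall d x1 eps, 1 - d < U x1 < 1 -> 0 < eps ->
  exists y, y < x1 /\ (1 - d < U y < 1) /\ 1 - U y < eps.
Proof.
  intros [HUc [HUm [HU1 [HUl _]]]] d x1 eps Hx1 He.
  set (e := Rmin eps (1 - U x1)).
  assert (He1 : 0 < e) by (apply Rmin_glb_lt; lra).
  assert (He2 : e <= eps) by apply Rmin_l.
  assert (He3 : e <= 1 - U x1) by apply Rmin_r.
  destruct (HUl (e/2) ltac:(lra)) as [M HM].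
  set (y0 := Rmin M x1 - 1).
  assert (Hy0 : y0 < x1) by (unfold y0; assert (Rmin M x1 <= x1) by apply Rmin_r; lra).
  assert (HUy0 : 1 - e/2 < U y0) by (apply HM; unfold y0; assert (Rmin M x1 <= M) by apply Rmin_l; lra).
  assert (Hcont : continuity U) by (intro x; apply continuity_pt_filterlim; apply HUc).
  destruct (IVT_gen U y0 x1 (1 - e/2) Hcont) as [y [Hy HUy]].
  { rewrite Rmin_right, Rmax_left; try lra. }
  rewrite Rmin_left, Rmax_right in Hy by lra.
  exists y. assert (y <> x1) by (intro; subst; lra).
  split; [lra|]. split; [|lra]. split; [|lra].
  assert (U x1 <= U y) by (apply HUm; lra). lra.
Qed.

Lemma liminf_phi m p c gam h U phi w d Dmax : setup m p c gam h U phi w ->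
  0 < m -> 1 < p -> 0 < d <= 1 -> 0 < Dmax ->
  (forall x, 1 - d < U x < 1 -> m * Rpower (U x) (m - 1) <= Dmax) ->
  forall x1 eps, 1 - d < U x1 < 1 -> 0 < eps ->
  exists y, y <= x1 /\ (1 - d < U y < 1) /\ phi y < eps.
Proof.
  intros HS Hm Hp Hd HDm HDle x1 eps Hx1 He.
  destruct HS as [HUc [HUm [HU1 [HUl [Hwc [Hw1 Hder]]]]]].
  apply Classical_Prop.NNPP. intro Hn.
  assert (Hge : forall y, y <= x1 -> 1 - d < U y < 1 -> eps <= phi y).
  { intros y Hy HPy. destruct (Rle_or_lt eps (phi y)); auto.
    exfalso; apply Hn; exists y; auto. }
  set (k0 := Rpower eps (/ (p - 1))).
  assert (Hk0 : 0 < k0) by apply Rpower_pos.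
  assert (Hwk : forall y, y <= x1 -> 1 - d < U y < 1 -> k0 <= w y).
  { intros y Hy HPy. specialize (Hge y Hy HPy).
    destruct (Hder y ltac:(lra)) as [_ [_ [Hw0 [_ [_ Hphi]]]]].
    destruct (Req_dec (w y) 0) as [Hw|Hw].
    - rewrite Hphi, Hw, spow_nonpos in Hge; lra.
    - rewrite Hphi, spow_pos in Hge by lra.
      rewrite <- (Rpower_inv_pow (w y) (p - 1)) by lra.
      apply Rle_Rpower_l; [apply Rlt_le, Rinv_0_lt_compat; lra|]. split; auto. }
  destruct (Classical_Prop.classic (exists y1, y1 < x1 /\ U y1 = 1)) as [[y1 [Hy1 HU1y]]|Hnot].
  - assert (Hcont : continuity w) by (intro x; apply continuity_pt_filterlim; apply Hwc).
    assert (Hwx1 := Hwk x1 ltac:(lra) Hx1).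
    assert (Hwy1 := Hw1 y1 HU1y).
    destruct (IVT_gen w y1 x1 (k0/2) Hcont) as [t [Ht Hwt]].
    { rewrite Rmin_left, Rmax_right; lra. }
    rewrite Rmin_left, Rmax_right in Ht by lra.
    destruct (Req_dec (U t) 1) as [HUt|HUt].
    + rewrite (Hw1 t HUt) in Hwt. lra.
    + assert (U x1 <= U t) by (apply HUm; lra).
      specialize (HU1 t).
      specialize (Hwk t ltac:(lra) ltac:(lra)). lra.
  - assert (HP : forall y, y <= x1 -> 1 - d < U y < 1).
    { intros y Hy. assert (U x1 <= U y) by (apply HUm; lra).
      specialize (HU1 y). destruct (Req_dec y x1) as [->|Hne]; [lra|].
      destruct (Req_dec (U y) 1) as [HUy|HUy]; [|lra].
      exfalso; apply Hnot; exists y; split; auto; lra. }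
    set (kap := k0 / Dmax).
    assert (Hkap : 0 < kap) by (apply Rdiv_lt_0_compat; lra).
    set (T := 2 / kap).
    assert (HT : 0 < T) by (apply Rdiv_lt_0_compat; lra).
    destruct (mvt_le U (x1 - T) x1 ltac:(lra)) as [t [Ht Heq]].
    { intros u Hu. destruct (HP u ltac:(lra)). apply (Hder u ltac:(lra)). }
    destruct (HP t ltac:(lra)) as [HPt1 HPt2].
    destruct (Hder t ltac:(lra)) as [_ [_ [Hw0 [HDU _]]]].
    assert (HDpos : 0 < m * Rpower (U t) (m - 1)) by (apply Rmult_lt_0_compat; [lra|apply Rpower_pos]).
    assert (HDt := HDle t ltac:(lra)).
    assert (Hwt := Hwk t ltac:(lra) ltac:(lra)).
    assert (Hq : kap <= w t / (m * Rpower (U t) (m - 1))).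
    { apply div_le; auto. nra. }
    replace (x1 - (x1 - T)) with T in Heq by ring.
    assert (HkT : kap * T = 2) by (unfold T; field; lra).
    specialize (HU1 (x1 - T)).
    assert (Derive U t * T <= - kap * T).
    { rewrite HDU. apply Rmult_le_compat_r; lra. }
    lra.
Qed.

Lemma inv_close A m r : 0 < A -> 0 < m -> 0 < r ->
  exists e, 0 < e /\ e < m / 2 /\ forall D, m - e < D < m + e -> A / m - r <= A / D <= A / m + r.
Proof.
  intros HA Hm Hr.
  set (e := Rmin (m / 4) (r * m * m / (4 * A))).
  assert (He1 : e <= m / 4) by apply Rmin_l.
  assert (He2 : e <= r * m * m / (4 * A)) by apply Rmin_r.
  assert (He0 : 0 < e).
  { apply Rmin_glb_lt; [lra|]. apply Rdiv_lt_0_compat; [|lra]. repeat apply Rmult_lt_0_compat; lra. }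
  exists e. split; auto. split; [lra|].
  intros D HD.
  assert (HDp : 0 < D) by lra.
  assert (Heq : A / D - A / m = A * (m - D) / (D * m)) by (field; lra).
  assert (HAe : A * e <= r * m * m / 4).
  { apply Rmult_le_compat_l with (r := A) in He2; [|lra].
    replace (A * (r * m * m / (4 * A))) with (r * m * m / 4) in He2 by (field; lra). lra. }
  assert (Hb : Rabs (A * (m - D)) <= A * e).
  { rewrite Rabs_mult, Rabs_pos_eq by lra. apply Rmult_le_compat_l; [lra|].
    apply Rabs_le; lra. }
  assert (HDm : m * m / 2 <= D * m) by nra.
  assert (Hq : Rabs (A * (m - D) / (D * m)) <= r / 2).
  { unfold Rdiv. rewrite Rabs_mult, (Rabs_pos_eq (/ (D * m))).
    2: apply Rlt_le, Rinv_0_lt_compat; nra.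
    apply Rle_trans with (A * e * / (D * m)).
    - apply Rmult_le_compat_r; [apply Rlt_le, Rinv_0_lt_compat; nra|auto].
    - apply Rle_trans with (r * m * m / 4 * / (m * m / 2)).
      + apply Rmult_le_compat; try lra.
        * apply Rmult_le_pos; lra.
        * apply Rlt_le, Rinv_0_lt_compat; nra.
        * apply Rinv_le_contravar; nra.
      + apply Req_le. field. lra. }
  rewrite <- Heq in Hq. apply Rabs_le_between in Hq. lra.
Qed.

Lemma combine (U phi : R -> R) C mu : 0 < C ->
  (forall x, 0 < U x -> 0 <= phi x) ->
  (forall eps, 0 < eps -> exists d, 0 < d /\ forall x, 1 - d < U x < 1 ->
      phi x <= (1 + eps) * (C * Rpower (1 - U x) mu)) ->
  (forall eps, 0 < eps < 1 -> exists d, 0 < d /\ forall x, 1 - d < U x < 1 ->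
      (1 - eps) * (C * Rpower (1 - U x) mu) <= phi x) ->
  forall eps, 0 < eps -> exists d, 0 < d /\ forall x, 1 - d < U x < 1 ->
      Rabs (phi x - C * Rpower (1 - U x) mu) <= eps * (C * Rpower (1 - U x) mu).
Proof.
  intros HC Hphi Hup Hlow eps He.
  destruct (Hup eps He) as [d1 [Hd1 H1]].
  destruct (Rlt_or_le eps 1) as [Hlt|Hge].
  - destruct (Hlow eps (conj He Hlt)) as [d2 [Hd2 H2]].
    exists (Rmin d1 d2). split; [apply Rmin_glb_lt; auto|].
    intros x Hx. assert (Rmin d1 d2 <= d1) by apply Rmin_l. assert (Rmin d1 d2 <= d2) by apply Rmin_r.
    specialize (H1 x ltac:(lra)). specialize (H2 x ltac:(lra)).
    apply Rabs_le. lra.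
  - exists (Rmin d1 1). split; [apply Rmin_glb_lt; lra|].
    intros x Hx. assert (Rmin d1 1 <= d1) by apply Rmin_l. assert (Rmin d1 1 <= 1) by apply Rmin_r.
    specialize (H1 x ltac:(lra)). specialize (Hphi x ltac:(lra)).
    assert (0 < C * Rpower (1 - U x) mu) by (apply Rmult_lt_0_compat; [lra|apply Rpower_pos]).
    apply Rabs_le. nra.
Qed.

Lemma region m p c gam a h U phi w : setup m p c gam h U phi w -> standing_h m a h -> 0 < m ->
  forall eD eh, 0 < eD -> 0 < eh -> exists d, 0 < d /\ d <= 1/2 /\
    forall x, 1 - d < U x < 1 ->
      m - eD < m * Rpower (U x) (m - 1) < m + eD /\
      Rabs (h (U x) + Derive h 1 * (1 - U x)) <= eh * (1 - U x).
Proof.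
  intros HS Hh Hm eD eh HeD Heh.
  destruct (rpow_near1 (m - 1) (eD / m) ltac:(apply Rdiv_lt_0_compat; lra)) as [d1 [Hd1 H1]].
  destruct (h_facts m a h Hh) as [_ [_ Hha]].
  destruct (Hha eh Heh) as [d2 [Hd2 H2]].
  set (d := Rmin (Rmin d1 d2) (1/2)).
  assert (Hdd1 : d <= d1) by (unfold d; eapply Rle_trans; [apply Rmin_l|apply Rmin_l]).
  assert (Hdd2 : d <= d2) by (unfold d; eapply Rle_trans; [apply Rmin_l|apply Rmin_r]).
  assert (Hdd3 : d <= 1/2) by (unfold d; apply Rmin_r).
  assert (Hd0 : 0 < d) by (unfold d; repeat apply Rmin_glb_lt; lra).
  exists d. split; auto. split; auto.
  intros x Hx. split.
  - specialize (H1 (U x) ltac:(rewrite Rabs_left1; lra)).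
    apply Rabs_def2 in H1. destruct H1 as [H1a H1b].
    assert (Hr : m * (eD / m) = eD) by (field; lra).
    split; nra.
  - specialize (H2 (1 - U x) ltac:(lra)). replace (1 - (1 - U x)) with (U x) in H2 by ring. auto.
Qed.

Lemma gderiv_lin (phi U : R -> R) K x : ex_derive phi x -> ex_derive U x ->
  ex_derive (fun t => phi t - K * (1 - U t)) x /\
  Derive (fun t => phi t - K * (1 - U t)) x = Derive phi x + K * Derive U x.
Proof.
  intros H1 H2.
  assert (HD : is_derive (fun t => phi t - K * (1 - U t)) x (Derive phi x + K * Derive U x)).
  { auto_derive; [repeat split; auto|]. change (fun x0 : R => phi x0) with phi. change (fun x0 : R => U x0) with U. ring. }
  split; [eexists; eauto|]. apply is_derive_unique; auto.
Qed.

Lemma gderiv_pow (phi U : R -> R) A r x : ex_derive phi x -> ex_derive U x -> U x < 1 ->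
  ex_derive (fun t => phi t - A * Rpower (1 - U t) r) x /\
  Derive (fun t => phi t - A * Rpower (1 - U t) r) x =
    Derive phi x + A * r * Rpower (1 - U x) (r - 1) * Derive U x.
Proof.
  intros H1 H2 H3.
  assert (HP : is_derive (fun y => Rpower y r) (1 - U x) (r * Rpower (1 - U x) (r - 1))).
  { apply is_derive_Reals. apply derivable_pt_lim_power. lra. }
  assert (HZ : is_derive (fun t => 1 - U t) x (- Derive U x)).
  { auto_derive; [repeat split; auto|]. change (fun x0 : R => U x0) with U. ring. }
  assert (HC : is_derive (fun t => Rpower (1 - U t) r) x ((- Derive U x) * (r * Rpower (1 - U x) (r - 1)))).
  { apply (is_derive_comp (fun y => Rpower y r) (fun t => 1 - U t)); auto. }
  assert (HD : is_derive (fun t => phi t - A * Rpower (1 - U t) r) x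
                 (Derive phi x + A * r * Rpower (1 - U x) (r - 1) * Derive U x)).
  { assert (Hphi := Derive_correct phi x H1).
    apply is_derive_Reals in Hphi. apply is_derive_Reals in HC. apply is_derive_Reals.
    replace (Derive phi x + A * r * Rpower (1 - U x) (r - 1) * Derive U x)
      with (Derive phi x - A * (- Derive U x * (r * Rpower (1 - U x) (r - 1)))) by ring.
    apply (derivable_pt_lim_minus phi (fun t => A * Rpower (1 - U t) r)); auto.
    apply (derivable_pt_lim_scal (fun t => Rpower (1 - U t) r)); auto. }
  split; [eexists; eauto|]. apply is_derive_unique; auto.
Qed.

Lemma spow1 w : 0 <= w -> spow w 1 = w.
Proof.
  intro H. destruct (Req_dec w 0) as [->|Hn].
  - apply spow_nonpos; lra.
  - rewrite spow_pos by lra. apply Rpower_1; lra.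
Qed.

Lemma interv_U (U : R -> R) d : (forall x y, x <= y -> U y <= U x) ->
  interv (fun x => 1 - d < U x < 1).
Proof.
  intros HUm x y t Hx Hy Ht.
  assert (U t <= U x) by (apply HUm; lra). assert (U y <= U t) by (apply HUm; lra). lra.
Qed.

Lemma upper2 m c gam a h U phi w C : setup m 2 c gam h U phi w -> standing_h m a h ->
  0 < m -> 0 < c -> 0 <= gam -> 0 < C ->
  C * C + (c + gam * m) * C - m * (- Derive h 1) = 0 ->
  forall K, C < K -> exists d, 0 < d /\ forall x, 1 - d < U x < 1 -> phi x <= K * (1 - U x).
Proof.
  intros HS Hh Hm Hc Hg HC HCeq K HK.
  set (k := - Derive h 1).
  assert (Hk : 0 < k) by (unfold k; destruct (h_facts m a h Hh) as [_ [Hd _]]; lra).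
  set (B := c + gam * m).
  set (rho := (K * K + B * K - m * k) / m).
  assert (Hrho : 0 < rho).
  { unfold rho. apply Rdiv_lt_0_compat; auto.
    replace (K * K + B * K - m * k) with ((K - C) * (K + C + B)) by (unfold B, k in *; nra).
    unfold B; apply Rmult_lt_0_compat; nra. }
  set (A := (c + K) * K).
  destruct (inv_close A m (rho / 2) ltac:(unfold A; nra) Hm ltac:(lra)) as [eD [HeD [HeD2 HAD]]].
  destruct (region m 2 c gam a h U phi w HS Hh Hm eD (rho / 4) HeD ltac:(lra)) as [d [Hd [Hd2 Hreg]]].
  exists d. split; auto. intros x0 Hx0.
  pose proof HS as HS0.
  destruct HS as [HUc [HUm [HU1 [HUl [Hwc [Hw1 Hder]]]]]].
  set (g := fun t => phi t - K * (1 - U t)).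
  cut (g x0 <= 0); [unfold g; lra|].
  apply (upper_barrier (fun x => 1 - d < U x < 1) g phi); auto.
  - apply interv_U; auto.
  - intros x Hx. destruct (Hder x ltac:(lra)) as [HdU [Hdphi _]].
    apply (gderiv_lin phi U K x Hdphi HdU).
  - intros x Hx Hgx. destruct (Hder x ltac:(lra)) as [HdU [Hdphi [Hw0 [HDU [HDphi Hphiw]]]]].
    unfold g; rewrite (proj2 (gderiv_lin phi U K x Hdphi HdU)).
    rewrite HDphi, HDU. replace (2 - 1) with 1 in Hphiw by ring. rewrite spow1 in Hphiw by auto.
    destruct (Hreg x Hx) as [HD Hhb].
    set (D := m * Rpower (U x) (m - 1)) in *.
    set (z := 1 - U x) in *.
    assert (Hz : 0 < z) by (unfold z; lra).
    fold k in Hhb.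
    assert (HDp : 0 < D) by lra.
    unfold g in Hgx. fold z in Hgx.
    assert (Hpz : K * z <= phi x) by lra.
    assert (H1 : (c + K) * (K * z / D) <= (c + K) * (phi x / D)).
    { apply Rmult_le_compat_l; [lra|]. unfold Rdiv. apply Rmult_le_compat_r; [apply Rlt_le, Rinv_0_lt_compat; lra|lra]. }
    assert (H2 : (c + K) * (K * z / D) = z * (A / D)) by (unfold A; field; lra).
    destruct (HAD D HD) as [HAD1 _].
    assert (H3 : z * (A / m - rho / 2) <= z * (A / D)) by (apply Rmult_le_compat_l; lra).
    apply Rabs_le_between in Hhb.
    assert (H4 : gam * (K * z) <= gam * phi x) by (apply Rmult_le_compat_l; lra).
    assert (Hrel : A / m + gam * K - k = rho) by (unfold rho, A, B; field; lra).
    assert (H5 : z * (A / m - rho / 2) = z * (A / m) - z * (rho / 2)) by ring.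
    assert (H6 : z * rho > 0) by nra.
    replace (c * (- w x / D) - gam * phi x + h (U x) + K * (- w x / D))
      with (- ((c + K) * (phi x / D)) - gam * phi x + h (U x)) by (rewrite Hphiw; field; lra).
    assert (z * (A / m) + gam * K * z - k * z = z * rho) by (rewrite <- Hrel; ring).
    assert (Hkd : k = - Derive h 1) by reflexivity.
    assert (z * (rho / 2) = z * rho / 2) by (clear; field).
    assert (gam * (K * z) = gam * K * z) by (clear; ring).
    assert (Derive h 1 * z = - (k * z)) by (rewrite Hkd; clear; ring).
    lra.
  - intros x Hx. destruct (Hder x ltac:(lra)) as [_ [_ [Hw0 [_ [_ Hphiw]]]]].
    unfold g. assert (0 <= K * (1 - U x)) by (apply Rmult_le_pos; lra). lra.
  - intros x eps Hx He.
    apply (liminf_phi m 2 c gam h U phi w d (m + eD)); auto; try lra.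
    intros y Hy. destruct (Hreg y Hy). lra.
Qed.

Lemma zderiv (U : R -> R) x : ex_derive U x ->
  ex_derive (fun t => 1 - U t) x /\ Derive (fun t => 1 - U t) x = - Derive U x.
Proof.
  intros H.
  assert (HD : is_derive (fun t => 1 - U t) x (- Derive U x)).
  { auto_derive; [repeat split; auto|]. change (fun x0 : R => U x0) with U. ring. }
  split; [eexists; eauto|]. apply is_derive_unique; auto.
Qed.

Lemma lower2 m c gam a h U phi w C : setup m 2 c gam h U phi w -> standing_h m a h ->
  0 < m -> 0 < c -> 0 <= gam -> 0 < C ->
  C * C + (c + gam * m) * C - m * (- Derive h 1) = 0 ->
  forall K, 0 < K < C -> exists d, 0 < d /\ forall x, 1 - d < U x < 1 -> K * (1 - U x) <= phi x.
Proof.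
  intros HS Hh Hm Hc Hg HC HCeq K HK.
  set (k := - Derive h 1).
  assert (Hk : 0 < k) by (unfold k; destruct (h_facts m a h Hh) as [_ [Hd _]]; lra).
  set (B := c + gam * m).
  set (rho := (m * k - K * K - B * K) / m).
  assert (Hrho : 0 < rho).
  { unfold rho. apply Rdiv_lt_0_compat; auto.
    replace (m * k - K * K - B * K) with ((C - K) * (K + C + B)) by (unfold B, k in *; nra).
    unfold B; apply Rmult_lt_0_compat; nra. }
  set (A := (c + K) * K).
  destruct (inv_close A m (rho / 4) ltac:(unfold A; nra) Hm ltac:(lra)) as [eD [HeD [HeD2 HAD]]].
  destruct (region m 2 c gam a h U phi w HS Hh Hm eD (rho / 4) HeD ltac:(lra)) as [d [Hd [Hd2 Hreg]]].
  exists d. split; auto. intros x0 Hx0.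
  pose proof HS as HS0.
  destruct HS as [HUc [HUm [HU1 [HUl [Hwc [Hw1 Hder]]]]]].
  set (g := fun t => phi t - K * (1 - U t)).
  cut (0 <= g x0); [unfold g; lra|].
  set (eta := rho * m / (4 * K)).
  assert (Heta : 0 < eta) by (unfold eta; apply Rdiv_lt_0_compat; nra).
  apply (lower_barrier (fun x => 1 - d < U x < 1) g (fun t => 1 - U t) eta K); auto; try lra.
  - apply interv_U; auto.
  - intros x Hx. destruct (Hder x ltac:(lra)) as [HdU [Hdphi _]].
    apply (gderiv_lin phi U K x Hdphi HdU).
  - intros x Hx. destruct (Hder x ltac:(lra)) as [HdU _].
    apply (zderiv U x HdU).
  - intros x Hx Hgx. destruct (Hder x ltac:(lra)) as [HdU [Hdphi [Hw0 [HDU [HDphi Hphiw]]]]].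
    unfold g; rewrite (proj2 (gderiv_lin phi U K x Hdphi HdU)).
    rewrite (proj2 (zderiv U x HdU)).
    rewrite HDphi, HDU. replace (2 - 1) with 1 in Hphiw by ring. rewrite spow1 in Hphiw by auto.
    destruct (Hreg x Hx) as [HD Hhb].
    set (D := m * Rpower (U x) (m - 1)) in *.
    set (z := 1 - U x) in *.
    assert (Hz : 0 < z) by (unfold z; lra).
    assert (HDp : 0 < D) by lra.
    unfold g in Hgx. fold z in Hgx.
    assert (Hpz : phi x <= K * z) by lra.
    rewrite <- Hphiw.
    assert (H1 : (c + K) * (phi x / D) <= (c + K) * (K * z / D)).
    { apply Rmult_le_compat_l; [lra|]. unfold Rdiv. apply Rmult_le_compat_r; [apply Rlt_le, Rinv_0_lt_compat; lra|lra]. }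
    assert (H2 : (c + K) * (K * z / D) = z * (A / D)) by (unfold A; field; lra).
    destruct (HAD D HD) as [_ HAD2].
    assert (H3 : z * (A / D) <= z * (A / m + rho / 4)) by (apply Rmult_le_compat_l; lra).
    apply Rabs_le_between in Hhb.
    assert (H4 : gam * phi x <= gam * (K * z)) by (apply Rmult_le_compat_l; lra).
    assert (Hrel : k - A / m - gam * K = rho) by (unfold rho, A, B; field; lra).
    assert (H7 : phi x / D <= 2 * K * z / m).
    { apply div_le; auto. nra. }
    assert (H8 : eta * (phi x / D) <= eta * (2 * K * z / m)) by (apply Rmult_le_compat_l; lra).
    assert (H9 : eta * (2 * K * z / m) = z * rho / 2) by (unfold eta; field; lra).
    assert (E1 : c * (- phi x / D) - gam * phi x + h (U x) + K * (- phi x / D)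
               = - ((c + K) * (phi x / D)) - gam * phi x + h (U x)) by (field; lra).
    assert (E2 : - (- phi x / D) = phi x / D) by (field; lra).
    rewrite E1, E2.
    assert (Hkd : k = - Derive h 1) by reflexivity.
    assert (E3 : z * (A / m + rho / 4) = z * (A / m) + z * rho / 4) by (clear - Hm; field; lra).
    assert (E4 : gam * (K * z) = gam * K * z) by (clear; ring).
    assert (E5 : Derive h 1 * z = - (k * z)) by (rewrite Hkd; clear; ring).
    assert (E6 : z * (A / m) + gam * K * z - k * z = - (z * rho)) by (rewrite <- Hrel; clear; ring).
    assert (E7 : rho / 4 * z = z * rho / 4) by (clear; field).
    assert (H6 : z * rho > 0) by nra.
    split; lra.
  - intros x Hx. destruct (Hder x ltac:(lra)) as [_ [_ [Hw0 [_ [_ Hphiw]]]]].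
    unfold g. replace (2 - 1) with 1 in Hphiw by ring. rewrite spow1 in Hphiw by auto. lra.
  - intros x Hx. lra.
  - intros x eps Hx He. destruct (liminf_z m 2 c gam h U phi w HS0 d x eps Hx He) as [y Hy].
    exists y. exact Hy.
Qed.

Lemma locally_of_eps (x : R) (P : R -> Prop) d : 0 < d ->
  (forall t, Rabs (t - x) < d -> P t) -> locally x P.
Proof.
  intros Hd H. exists (mkposreal d Hd). intros t Ht. apply H. exact Ht.
Qed.

Lemma wave_setup m p gam h c U : 0 < m -> 1 < p ->
  finite_wavefront m p gam h c U ->
  setup m p c gam h U
    (fun x => - pflux p (Derive (fun y => spow (U y) m) x))
    (fun x => - Derive (fun y => spow (U y) m) x).
Proof.
  intros Hm Hp [HUc [HUm [HUl [HVd [HVc [xi0 [Hz [Hpos Hode]]]]]]]].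
  set (V := fun y => spow (U y) m).
  assert (HUl' : forall eps, 0 < eps -> exists M, forall x, x < M -> Rabs (U x - 1) < eps).
  { intros eps He. apply is_lim_spec in HUl. destruct (HUl (mkposreal eps He)) as [M HM].
    exists M. intros x Hx. apply (HM x Hx). }
  assert (HU1 : forall x, U x <= 1).
  { intros x. destruct (Rle_or_lt (U x) 1) as [|Hgt]; auto. exfalso.
    destruct (HUl' (U x - 1) ltac:(lra)) as [M HM].
    set (y := Rmin M x - 1).
    assert (Rmin M x <= M) by apply Rmin_l. assert (Rmin M x <= x) by apply Rmin_r.
    specialize (HM y ltac:(unfold y; lra)).
    assert (U x <= U y) by (apply HUm; unfold y; lra).
    apply Rabs_def2 in HM. lra. }
  assert (Hlt : forall x, 0 < U x -> x < xi0).
  { intros x Hx. destruct (Rlt_or_le x xi0) as [|Hge]; auto. rewrite (Hz x Hge) in Hx. lra. }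
  split; [exact HUc|]. split; [exact HUm|]. split; [exact HU1|].
  split.
  { intros eps He. destruct (HUl' eps He) as [M HM]. exists M. intros x Hx.
    specialize (HM x Hx). apply Rabs_def2 in HM. lra. }
  split.
  { intros x. apply (continuous_opp (fun t => Derive V t)). apply HVc. }
  split.
  { intros x Hx1.
    assert (Hs : forall s, s < x -> Derive V s = 0).
    { intros s Hs. apply is_derive_unique.
      apply (is_derive_ext_loc (fun _ => 1) V).
      - apply (locally_of_eps s _ (x - s)); [lra|]. intros t Ht.
        assert (t < x) by (apply Rabs_def2 in Ht; lra).
        assert (U x <= U t) by (apply HUm; lra). specialize (HU1 t).
        unfold V. replace (U t) with 1 by lra. rewrite spow_pos by lra.
        rewrite Rpower_1_base. reflexivity.
      - apply is_derive_Reals. apply derivable_pt_lim_const. }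
    destruct (Req_dec (Derive V x) 0) as [H0|Hn]; [fold V; lra|]. exfalso.
    destruct (cont_eps (Derive V) x (HVc x) (Rabs (Derive V x)) ltac:(apply Rabs_pos_lt; auto))
      as [d [Hd Hd']].
    specialize (Hd' (x - d/2) ltac:(rewrite Rabs_left1; lra)).
    rewrite (Hs (x - d/2) ltac:(lra)) in Hd'.
    rewrite Rminus_0_l, Rabs_Ropp in Hd'. lra. }
  intros x Hx. destruct (Hode x (Hlt x Hx)) as [HdU [HdF Heq]].
  split; [exact HdU|]. split.
  { apply (ex_derive_opp (fun t => pflux p (Derive V t))). exact HdF. }
  set (D := m * Rpower (U x) (m - 1)).
  assert (HDp : 0 < D) by (unfold D; apply Rmult_lt_0_compat; [lra|apply Rpower_pos]).
  assert (HVx : Derive V x = Derive U x * D).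
  { apply is_derive_unique.
    apply (is_derive_ext_loc (fun y => Rpower (U y) m) V).
    - destruct (cont_eps U x (HUc x) (U x) Hx) as [d [Hd Hd']].
      apply (locally_of_eps x _ d Hd). intros t Ht. specialize (Hd' t Ht).
      apply Rabs_def2 in Hd'. unfold V. rewrite spow_pos by lra. reflexivity.
    - apply (is_derive_comp (fun y => Rpower y m) U).
      + apply is_derive_Reals. apply derivable_pt_lim_power. auto.
      + apply Derive_correct. auto. }
  assert (HUd : Derive U x <= 0).
  { destruct (Rle_or_lt (Derive U x) 0) as [|Hgt]; auto. exfalso.
    destruct (deriv_pos_right U x (Derive U x) (Derive_correct _ _ HdU) Hgt) as [d [Hd Hd']].
    specialize (Hd' (x + d/2) ltac:(lra)).
    assert (U (x + d/2) <= U x) by (apply HUm; lra). lra. }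
  assert (HVneg : Derive V x <= 0) by (rewrite HVx; nra).
  fold V.
  split; [lra|].
  split.
  { rewrite HVx. field. lra. }
  split.
  { rewrite (Derive_opp (fun t => pflux p (Derive V t))).
    fold V in Heq. lra. }
  unfold pflux.
  destruct (Rlt_dec 0 (Derive V x)) as [Hc1|Hc1]; [lra|].
  destruct (Rlt_dec (Derive V x) 0) as [Hc2|Hc2].
  - rewrite spow_pos by lra. ring.
  - assert (Derive V x = 0) by lra. rewrite H. rewrite spow_nonpos by lra. ring.
Qed.

Lemma upper_lt2 m p c gam a h U phi w C : setup m p c gam h U phi w -> standing_h m a h ->
  0 < m -> 1 < p -> 0 < c -> 0 < gam -> C = (- Derive h 1) / gam ->
  forall K, C < K -> exists d, 0 < d /\ forall x, 1 - d < U x < 1 -> phi x <= K * (1 - U x).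
Proof.
  intros HS Hh Hm Hp Hc Hg HCe K HK.
  assert (HC0 : 0 < C) by (rewrite HCe; apply Rdiv_lt_0_compat; [destruct (h_facts m a h Hh) as [_ [Hd _]]; lra|lra]).
  set (k := - Derive h 1).
  assert (Hk : 0 < k) by (unfold k; destruct (h_facts m a h Hh) as [_ [Hd _]]; lra).
  set (rho := gam * K - k).
  assert (Hrho : 0 < rho).
  { unfold rho. assert (gam * C = k) by (rewrite HCe; unfold k; field; lra). nra. }
  destruct (region m p c gam a h U phi w HS Hh Hm (m / 2) (rho / 2) ltac:(lra) ltac:(lra)) as [d [Hd [Hd2 Hreg]]].
  exists d. split; auto. intros x0 Hx0.
  pose proof HS as HS0.
  destruct HS as [HUc [HUm [HU1 [HUl [Hwc [Hw1 Hder]]]]]].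
  set (g := fun t => phi t - K * (1 - U t)).
  cut (g x0 <= 0); [unfold g; lra|].
  assert (HK0 : 0 < K) by lra.
  apply (upper_barrier (fun x => 1 - d < U x < 1) g phi); auto.
  - apply interv_U; auto.
  - intros x Hx. destruct (Hder x ltac:(lra)) as [HdU [Hdphi _]].
    apply (gderiv_lin phi U K x Hdphi HdU).
  - intros x Hx Hgx. destruct (Hder x ltac:(lra)) as [HdU [Hdphi [Hw0 [HDU [HDphi Hphiw]]]]].
    unfold g; rewrite (proj2 (gderiv_lin phi U K x Hdphi HdU)).
    rewrite HDphi, HDU.
    destruct (Hreg x Hx) as [HD Hhb].
    set (D := m * Rpower (U x) (m - 1)) in *.
    set (z := 1 - U x) in *.
    assert (Hz : 0 < z) by (unfold z; lra).
    assert (HDp : 0 < D) by lra.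
    unfold g in Hgx. fold z in Hgx.
    assert (Hpz : K * z <= phi x) by lra.
    assert (Hwd : 0 <= w x / D) by (apply Rdiv_le_0_compat; lra).
    assert (E1 : c * (- w x / D) - gam * phi x + h (U x) + K * (- w x / D)
               = - ((c + K) * (w x / D)) - gam * phi x + h (U x)) by (field; lra).
    rewrite E1.
    apply Rabs_le_between in Hhb.
    assert (H4 : gam * (K * z) <= gam * phi x) by (apply Rmult_le_compat_l; lra).
    assert (H5 : 0 <= (c + K) * (w x / D)) by (apply Rmult_le_pos; lra).
    assert (Hkd : k = - Derive h 1) by reflexivity.
    assert (E4 : gam * (K * z) = gam * K * z) by (clear; ring).
    assert (E5 : Derive h 1 * z = - (k * z)) by (rewrite Hkd; clear; ring).
    assert (E6 : gam * K * z - k * z = rho * z) by (unfold rho; clear; ring).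
    assert (E7 : rho / 2 * z = rho * z / 2) by (clear; field).
    assert (H6 : rho * z > 0) by nra.
    lra.
  - intros x Hx. unfold g. assert (0 <= K * (1 - U x)) by (apply Rmult_le_pos; lra). lra.
  - intros x eps Hx He.
    apply (liminf_phi m p c gam h U phi w d (m + m / 2)); auto; try lra.
    intros y Hy. destruct (Hreg y Hy). lra.
Qed.

Lemma lower_lt2 m p c gam a h U phi w C : setup m p c gam h U phi w -> standing_h m a h ->
  0 < m -> 1 < p -> p < 2 -> 0 < c -> 0 < gam -> C = (- Derive h 1) / gam ->
  forall K, 0 < K < C -> exists d, 0 < d /\ forall x, 1 - d < U x < 1 -> K * (1 - U x) <= phi x.
Proof.
  intros HS Hh Hm Hp Hp2 Hc Hg HCe K HK.
  set (k := - Derive h 1).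
  assert (Hk : 0 < k) by (unfold k; destruct (h_facts m a h Hh) as [_ [Hd _]]; lra).
  set (rho := k - gam * K).
  assert (Hrho : 0 < rho).
  { unfold rho. assert (gam * C = k) by (rewrite HCe; unfold k; field; lra). nra. }
  set (q := / (p - 1)).
  assert (Hq1 : 1 < q).
  { unfold q. rewrite <- Rinv_1. apply Rinv_lt_contravar; lra. }
  set (Kq := Rpower K q).
  assert (HKq : 0 < Kq) by apply Rpower_pos.
  set (s := rho * m / (8 * (c + K) * Kq)).
  assert (Hs : 0 < s) by (unfold s; apply Rdiv_lt_0_compat; [nra|]; apply Rmult_lt_0_compat; lra).
  destruct (rpow_small (q - 1) s ltac:(lra) Hs) as [ds [Hds Hds']].
  destruct (region m p c gam a h U phi w HS Hh Hm (m / 2) (rho / 4) ltac:(lra) ltac:(lra)) as [d0 [Hd0 [Hd02 Hreg]]].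
  set (d := Rmin d0 ds).
  assert (Hdd0 : d <= d0) by apply Rmin_l. assert (Hdds : d <= ds) by apply Rmin_r.
  assert (Hd : 0 < d) by (apply Rmin_glb_lt; lra).
  exists d. split; auto. intros x0 Hx0.
  pose proof HS as HS0.
  destruct HS as [HUc [HUm [HU1 [HUl [Hwc [Hw1 Hder]]]]]].
  set (g := fun t => phi t - K * (1 - U t)).
  cut (0 <= g x0); [unfold g; lra|].
  apply (lower_barrier (fun x => 1 - d < U x < 1) g (fun t => 1 - U t) (c + K) K); auto; try lra.
  - apply interv_U; auto.
  - intros x Hx. destruct (Hder x ltac:(lra)) as [HdU [Hdphi _]].
    apply (gderiv_lin phi U K x Hdphi HdU).
  - intros x Hx. destruct (Hder x ltac:(lra)) as [HdU _].
    apply (zderiv U x HdU).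
  - intros x Hx Hgx. destruct (Hder x ltac:(lra)) as [HdU [Hdphi [Hw0 [HDU [HDphi Hphiw]]]]].
    unfold g; rewrite (proj2 (gderiv_lin phi U K x Hdphi HdU)).
    rewrite (proj2 (zderiv U x HdU)).
    rewrite HDphi, HDU.
    destruct (Hreg x ltac:(lra)) as [HD Hhb].
    set (D := m * Rpower (U x) (m - 1)) in *.
    set (z := 1 - U x) in *.
    assert (Hz : 0 < z) by (unfold z; lra).
    assert (HDp : 0 < D) by lra.
    unfold g in Hgx. fold z in Hgx.
    assert (Hpz : phi x <= K * z) by lra.
    assert (Hzs : Rpower z (q - 1) < s) by (apply Hds'; unfold z; lra).
    set (W := Kq * z * Rpower z (q - 1)).
    assert (HW0 : 0 < W) by (unfold W; apply Rmult_lt_0_compat; [nra|apply Rpower_pos]).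
    assert (HwW : w x <= W).
    { destruct (Req_dec (w x) 0) as [Hw|Hw]; [lra|].
      rewrite spow_pos in Hphiw by lra.
      assert (Hphip : 0 < phi x) by (rewrite Hphiw; apply Rpower_pos).
      assert (Hwq : w x = Rpower (phi x) q) by (rewrite Hphiw; unfold q; rewrite Rpower_inv_pow; lra).
      rewrite Hwq.
      assert (HE : W = Rpower (K * z) q).
      { assert (Hzq : Rpower z q = z * Rpower z (q - 1)).
        { rewrite <- (Rpower_1 z) at 2 by lra. rewrite <- Rpower_plus. f_equal. ring. }
        unfold W, Kq. rewrite <- Rpower_mult_distr by lra. rewrite Hzq. ring. }
      rewrite HE. apply Rle_Rpower_l; [lra|split; lra]. }
    assert (Hwd : w x / D <= W / (m / 2)) by (apply div_le; nra).
    assert (HWb : W / (m / 2) <= 2 * Kq * z * s / m).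
    { unfold W. apply div_le; [lra|lra|].
      assert (Hp0 : 0 < Kq * z * m) by (apply Rmult_lt_0_compat; [apply Rmult_lt_0_compat|]; lra).
      replace (2 * Kq * z * s * (m / 2)) with ((Kq * z * m) * s) by (clear; field).
      replace (Kq * z * Rpower z (q - 1) * m) with ((Kq * z * m) * Rpower z (q - 1)) by (clear; ring).
      apply Rmult_le_compat_l; lra. }
    assert (HsE : (c + K) * (2 * Kq * z * s / m) = rho * z / 4).
    { unfold s. field. repeat split; nra. }
    assert (Hcw : (c + K) * (w x / D) <= rho * z / 4).
    { rewrite <- HsE. apply Rmult_le_compat_l; lra. }
    assert (Hwd0 : 0 <= w x / D) by (apply Rdiv_le_0_compat; lra).
    assert (E1 : c * (- w x / D) - gam * phi x + h (U x) + K * (- w x / D)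
               = - ((c + K) * (w x / D)) - gam * phi x + h (U x)) by (field; lra).
    assert (E2 : - (- w x / D) = w x / D) by (field; lra).
    rewrite E1, E2.
    apply Rabs_le_between in Hhb.
    assert (H4 : gam * phi x <= gam * (K * z)) by (apply Rmult_le_compat_l; lra).
    assert (Hkd : k = - Derive h 1) by reflexivity.
    assert (E4 : gam * (K * z) = gam * K * z) by (clear; ring).
    assert (E5 : Derive h 1 * z = - (k * z)) by (rewrite Hkd; clear; ring).
    assert (E6 : k * z - gam * K * z = rho * z) by (unfold rho; clear; ring).
    assert (E7 : rho / 4 * z = rho * z / 4) by (clear; field).
    assert (H6 : rho * z > 0) by nra.
    split; lra.
  - intros x Hx. destruct (Hder x ltac:(lra)) as [_ [_ [Hw0 [_ [_ Hphiw]]]]].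
    unfold g. assert (0 <= phi x).
    { rewrite Hphiw. destruct (Req_dec (w x) 0) as [->|Hw].
      - rewrite spow_nonpos; lra.
      - rewrite spow_pos by lra. left; apply Rpower_pos. }
    lra.
  - intros x Hx. lra.
  - intros x eps Hx He. destruct (liminf_z m p c gam h U phi w HS0 d x eps Hx He) as [y Hy].
    exists y. exact Hy.
Qed.

Lemma rpow_q_of (A z r : R) : 0 < A -> 0 < z -> 0 < r ->
  Rpower (A * Rpower z r) (/ r) = Rpower A (/ r) * z.
Proof.
  intros HA Hz Hr.
  rewrite <- Rpower_mult_distr by (auto; apply Rpower_pos).
  rewrite Rpower_inv_pow by lra. reflexivity.
Qed.

Lemma w_of_phi (w phi r : R) : 0 <= w -> phi = spow w r -> 0 < r -> 0 < phi ->
  w = Rpower phi (/ r).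
Proof.
  intros Hw Hphi Hr Hp.
  destruct (Req_dec w 0) as [Hw0|Hw0].
  - rewrite Hphi, Hw0, spow_nonpos in Hp; lra.
  - rewrite spow_pos in Hphi by lra. rewrite Hphi. rewrite Rpower_inv_pow; lra.
Qed.

Lemma upper_gt2 m p c gam a h U phi w : setup m p c gam h U phi w -> standing_h m a h ->
  0 < m -> 2 < p -> 0 < c -> 0 <= gam ->
  forall A, Rpower (m * (- Derive h 1) / c) (p - 1) < A ->
  exists d, 0 < d /\ forall x, 1 - d < U x < 1 -> phi x <= A * Rpower (1 - U x) (p - 1).
Proof.
  intros HS Hh Hm Hp Hc Hg A HA.
  assert (HA0 : 0 < A) by (assert (0 < Rpower (m * (- Derive h 1) / c) (p - 1)) by apply Rpower_pos; lra).
  set (k := - Derive h 1).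
  assert (Hk : 0 < k) by (unfold k; destruct (h_facts m a h Hh) as [_ [Hd _]]; lra).
  set (L := m * k / c).
  assert (HL : 0 < L) by (unfold L; apply Rdiv_lt_0_compat; nra).
  set (r := p - 1).
  assert (Hr : 1 < r) by (unfold r; lra).
  set (q := / r).
  assert (Hq : 0 < q) by (unfold q; apply Rinv_0_lt_compat; lra).
  set (K := Rpower A q).
  assert (HKL : L < K).
  { unfold K. rewrite <- (Rpower_inv_pow L r) by (auto; lra). apply Rlt_Rpower_l; auto.
    split; [apply Rpower_pos|auto]. }
  set (rho := c * K / m - k).
  assert (Hrho : 0 < rho).
  { unfold rho. assert (c * L / m = k) by (unfold L; field; split; lra).
    assert (c * L / m < c * K / m); [|lra].
    unfold Rdiv. apply Rmult_lt_compat_r; [apply Rinv_0_lt_compat; lra|nra]. }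
  destruct (inv_close (c * K) m (rho / 2) ltac:(unfold K; apply Rmult_lt_0_compat; [lra|apply Rpower_pos]) Hm ltac:(lra))
    as [eD [HeD [HeD2 HAD]]].
  destruct (region m p c gam a h U phi w HS Hh Hm eD (rho / 4) HeD ltac:(lra)) as [d [Hd [Hd2 Hreg]]].
  exists d. split; auto. intros x0 Hx0.
  pose proof HS as HS0.
  destruct HS as [HUc [HUm [HU1 [HUl [Hwc [Hw1 Hder]]]]]].
  set (g := fun t => phi t - A * Rpower (1 - U t) r).
  cut (g x0 <= 0); [unfold g; lra|].
  apply (upper_barrier (fun x => 1 - d < U x < 1) g phi); auto.
  - apply interv_U; auto.
  - intros x Hx. destruct (Hder x ltac:(lra)) as [HdU [Hdphi _]].
    apply (gderiv_pow phi U A r x Hdphi HdU ltac:(lra)).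
  - intros x Hx Hgx. destruct (Hder x ltac:(lra)) as [HdU [Hdphi [Hw0 [HDU [HDphi Hphiw]]]]].
    unfold g; rewrite (proj2 (gderiv_pow phi U A r x Hdphi HdU ltac:(lra))).
    rewrite HDphi, HDU.
    destruct (Hreg x Hx) as [HD Hhb].
    set (D := m * Rpower (U x) (m - 1)) in *.
    set (z := 1 - U x) in *.
    assert (Hz : 0 < z) by (unfold z; lra).
    assert (HDp : 0 < D) by lra.
    unfold g in Hgx. fold z in Hgx.
    assert (Hzr : 0 < A * Rpower z r) by (apply Rmult_lt_0_compat; [lra|apply Rpower_pos]).
    assert (Hphip : 0 < phi x) by lra.
    assert (Hwq : w x = Rpower (phi x) q) by (apply (w_of_phi _ _ r); auto; lra).
    assert (HwK : K * z <= w x).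
    { rewrite Hwq. unfold K, q. rewrite <- rpow_q_of by lra. apply Rle_Rpower_l; [left; apply Rinv_0_lt_compat; lra|split; lra]. }
    assert (H1 : c * (K * z / D) <= c * (w x / D)).
    { apply Rmult_le_compat_l; [lra|]. unfold Rdiv. apply Rmult_le_compat_r; [apply Rlt_le, Rinv_0_lt_compat; lra|lra]. }
    assert (H2 : c * (K * z / D) = z * (c * K / D)) by (field; lra).
    destruct (HAD D HD) as [HAD1 _].
    assert (H3 : z * (c * K / m - rho / 2) <= z * (c * K / D)) by (apply Rmult_le_compat_l; lra).
    apply Rabs_le_between in Hhb.
    assert (H4 : 0 <= gam * phi x) by (apply Rmult_le_pos; lra).
    assert (H5 : 0 <= A * r * Rpower z (r - 1) * (w x / D)).
    { apply Rmult_le_pos; [|apply Rdiv_le_0_compat; lra].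
      apply Rmult_le_pos; [nra|left; apply Rpower_pos]. }
    assert (E1 : c * (- w x / D) - gam * phi x + h (U x) + A * r * Rpower z (r - 1) * (- w x / D)
               = - (c * (w x / D)) - gam * phi x + h (U x) - A * r * Rpower z (r - 1) * (w x / D))
      by (field; lra).
    rewrite E1.
    assert (Hkd : k = - Derive h 1) by reflexivity.
    assert (E3 : z * (c * K / m - rho / 2) = z * (c * K / m) - z * rho / 2) by (clear - Hm; field; lra).
    assert (E5 : Derive h 1 * z = - (k * z)) by (rewrite Hkd; clear; ring).
    assert (E6 : z * (c * K / m) - k * z = z * rho) by (unfold rho; clear - Hm; field; lra).
    assert (E7 : rho / 4 * z = z * rho / 4) by (clear; field).
    assert (H6 : z * rho > 0) by nra.
    lra.
  - intros x Hx. unfold g. assert (0 <= A * Rpower (1 - U x) r) by (apply Rmult_le_pos; [lra|left; apply Rpower_pos]). lra.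
  - intros x eps Hx He.
    apply (liminf_phi m p c gam h U phi w d (m + eD)); auto; try lra.
    intros y Hy. destruct (Hreg y Hy). lra.
Qed.

Lemma lower_gt2 m p c gam a h U phi w : setup m p c gam h U phi w -> standing_h m a h ->
  0 < m -> 2 < p -> 0 < c -> 0 <= gam ->
  forall A, 0 < A < Rpower (m * (- Derive h 1) / c) (p - 1) ->
  exists d, 0 < d /\ forall x, 1 - d < U x < 1 -> A * Rpower (1 - U x) (p - 1) <= phi x.
Proof.
  intros HS Hh Hm Hp Hc Hg A HA.
  set (k := - Derive h 1).
  assert (Hk : 0 < k) by (unfold k; destruct (h_facts m a h Hh) as [_ [Hd _]]; lra).
  set (L := m * k / c).
  assert (HL : 0 < L) by (unfold L; apply Rdiv_lt_0_compat; nra).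
  set (r := p - 1).
  assert (Hr : 1 < r) by (unfold r; lra).
  set (q := / r).
  assert (Hq : 0 < q) by (unfold q; apply Rinv_0_lt_compat; lra).
  set (K := Rpower A q).
  assert (HK0 : 0 < K) by apply Rpower_pos.
  assert (HKL : K < L).
  { unfold K. rewrite <- (Rpower_inv_pow L r) by (auto; lra). apply Rlt_Rpower_l; auto; split; lra. }
  set (rho := k - c * K / m).
  assert (Hrho : 0 < rho).
  { unfold rho. assert (c * L / m = k) by (unfold L; field; split; lra).
    assert (c * K / m < c * L / m); [|lra].
    unfold Rdiv. apply Rmult_lt_compat_r; [apply Rinv_0_lt_compat; lra|nra]. }
  destruct (inv_close (c * K) m (rho / 4) ltac:(nra) Hm ltac:(lra))
    as [eD [HeD [HeD2 HAD]]].
  destruct (region m p c gam a h U phi w HS Hh Hm eD (rho / 4) HeD ltac:(lra)) as [d0 [Hd0 [Hd02 Hreg]]].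
  set (s1 := rho / (8 * (gam + 1) * A)).
  set (s2 := rho * m / (16 * A * r * K)).
  assert (Hs1 : 0 < s1) by (unfold s1; apply Rdiv_lt_0_compat; [lra|]; apply Rmult_lt_0_compat; lra).
  assert (Hs2 : 0 < s2) by (unfold s2; apply Rdiv_lt_0_compat; [nra|];
     repeat apply Rmult_lt_0_compat; lra).
  set (s := Rmin (Rmin s1 s2) 1).
  assert (Hss1 : s <= s1) by (unfold s; eapply Rle_trans; [apply Rmin_l|apply Rmin_l]).
  assert (Hss2 : s <= s2) by (unfold s; eapply Rle_trans; [apply Rmin_l|apply Rmin_r]).
  assert (Hss3 : s <= 1) by (unfold s; apply Rmin_r).
  assert (Hs : 0 < s) by (unfold s; repeat apply Rmin_glb_lt; lra).
  destruct (rpow_small (r - 1) s ltac:(lra) Hs) as [ds [Hds Hds']].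
  set (d := Rmin d0 ds).
  assert (Hdd0 : d <= d0) by apply Rmin_l. assert (Hdds : d <= ds) by apply Rmin_r.
  assert (Hd : 0 < d) by (apply Rmin_glb_lt; lra).
  exists d. split; auto. intros x0 Hx0.
  pose proof HS as HS0.
  destruct HS as [HUc [HUm [HU1 [HUl [Hwc [Hw1 Hder]]]]]].
  set (g := fun t => phi t - A * Rpower (1 - U t) r).
  cut (0 <= g x0); [unfold g; lra|].
  set (eta := rho * m / (8 * K)).
  assert (Heta : 0 < eta) by (unfold eta; apply Rdiv_lt_0_compat; nra).
  assert (Hzr : forall x, 1 - d < U x < 1 ->
            Rpower (1 - U x) r = (1 - U x) * Rpower (1 - U x) (r - 1) /\ Rpower (1 - U x) (r - 1) < s).
  { intros x Hx. split.
    - rewrite <- (Rpower_1 (1 - U x)) at 2 by lra. rewrite <- Rpower_plus. f_equal. ring.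
    - apply Hds'. lra. }
  assert (Hphi0 : forall x, 1 - d < U x < 1 -> 0 <= phi x).
  { intros x Hx. destruct (Hder x ltac:(lra)) as [_ [_ [Hw0 [_ [_ Hphiw]]]]].
    rewrite Hphiw. destruct (Req_dec (w x) 0) as [->|Hw].
    - rewrite spow_nonpos; lra.
    - rewrite spow_pos by lra. left; apply Rpower_pos. }
  apply (lower_barrier (fun x => 1 - d < U x < 1) g (fun t => 1 - U t) eta A); auto; try lra.
  - apply interv_U; auto.
  - intros x Hx. destruct (Hder x ltac:(lra)) as [HdU [Hdphi _]].
    apply (gderiv_pow phi U A r x Hdphi HdU ltac:(lra)).
  - intros x Hx. destruct (Hder x ltac:(lra)) as [HdU _].
    apply (zderiv U x HdU).
  - intros x Hx Hgx. destruct (Hder x ltac:(lra)) as [HdU [Hdphi [Hw0 [HDU [HDphi Hphiw]]]]].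
    assert (Hp0 := Hphi0 x Hx).
    destruct (Hzr x Hx) as [Hzr1 Hzr2].
    unfold g; rewrite (proj2 (gderiv_pow phi U A r x Hdphi HdU ltac:(lra))).
    rewrite (proj2 (zderiv U x HdU)).
    rewrite HDphi, HDU.
    destruct (Hreg x ltac:(lra)) as [HD Hhb].
    set (D := m * Rpower (U x) (m - 1)) in *.
    set (z := 1 - U x) in *.
    set (y := Rpower z (r - 1)) in *.
    assert (Hy0 : 0 < y) by apply Rpower_pos.
    assert (Hz : 0 < z) by (unfold z; lra).
    assert (HDp : 0 < D) by lra.
    unfold g in Hgx. fold z in Hgx.
    assert (Hpz : phi x <= A * Rpower z r) by lra.
    assert (HwK : w x <= K * z).
    { destruct (Req_dec (phi x) 0) as [Hph|Hph].
      - destruct (Req_dec (w x) 0) as [Hw|Hw]; [nra|].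
        rewrite spow_pos in Hphiw by lra. assert (0 < Rpower (w x) (p - 1)) by apply Rpower_pos. lra.
      - assert (Hwq : w x = Rpower (phi x) q) by (apply (w_of_phi _ _ r); auto; lra).
        rewrite Hwq. unfold K, q. rewrite <- rpow_q_of by lra.
        apply Rle_Rpower_l; [left; apply Rinv_0_lt_compat; lra|split; lra]. }
    assert (Hwd : w x / D <= K * z / D).
    { unfold Rdiv. apply Rmult_le_compat_r; [apply Rlt_le, Rinv_0_lt_compat; lra|lra]. }
    assert (Hwd0 : 0 <= w x / D) by (apply Rdiv_le_0_compat; lra).
    assert (HKD : K * z / D <= 2 * K * z / m) by (apply div_le; nra).
    destruct (HAD D HD) as [_ HAD2].
    assert (T1 : c * (w x / D) <= z * (c * K / m) + z * rho / 4).
    { assert (c * (w x / D) <= c * (K * z / D)) by (apply Rmult_le_compat_l; lra).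
      assert (c * (K * z / D) = z * (c * K / D)) by (field; lra).
      assert (z * (c * K / D) <= z * (c * K / m + rho / 4)) by (apply Rmult_le_compat_l; lra).
      assert (z * (c * K / m + rho / 4) = z * (c * K / m) + z * rho / 4) by (clear - Hm; field; lra).
      lra. }
    assert (T2 : gam * phi x <= z * rho / 8).
    { assert (gam * phi x <= gam * (A * (z * y))) by (rewrite <- Hzr1; apply Rmult_le_compat_l; lra).
      assert (gam * (A * (z * y)) <= (gam + 1) * A * y * z) by nra.
      assert ((gam + 1) * A * y <= (gam + 1) * A * s1).
      { apply Rmult_le_compat_l; [nra|lra]. }
      assert ((gam + 1) * A * s1 = rho / 8) by (unfold s1; field; lra).
      assert ((gam + 1) * A * y * z <= rho / 8 * z) by (apply Rmult_le_compat_r; lra).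
      lra. }
    assert (T3 : A * r * y * (w x / D) <= z * rho / 8).
    { assert (HAry : 0 <= A * r * y) by (apply Rmult_le_pos; [nra|lra]).
      assert (A * r * y * (w x / D) <= A * r * y * (2 * K * z / m)) by (apply Rmult_le_compat_l; lra).
      assert (A * r * y * (2 * K * z / m) = (2 * A * r * K / m) * y * z) by (clear - Hm; field; lra).
      assert (HP : 0 <= 2 * A * r * K / m) by (apply Rdiv_le_0_compat; [|lra]; repeat apply Rmult_le_pos; lra).
      assert ((2 * A * r * K / m) * y <= (2 * A * r * K / m) * s2) by (apply Rmult_le_compat_l; lra).
      assert ((2 * A * r * K / m) * s2 = rho / 8) by (unfold s2; field; repeat split; lra).
      assert ((2 * A * r * K / m) * y * z <= rho / 8 * z) by (apply Rmult_le_compat_r; lra).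
      lra. }
    assert (T4 : eta * (w x / D) <= z * rho / 4).
    { assert (eta * (w x / D) <= eta * (2 * K * z / m)) by (apply Rmult_le_compat_l; lra).
      assert (eta * (2 * K * z / m) = z * rho / 4) by (unfold eta; field; lra). lra. }
    assert (E1 : c * (- w x / D) - gam * phi x + h (U x) + A * r * y * (- w x / D)
               = - (c * (w x / D)) - gam * phi x + h (U x) - A * r * y * (w x / D))
      by (field; lra).
    assert (E2 : - (- w x / D) = w x / D) by (field; lra).
    rewrite E1, E2.
    apply Rabs_le_between in Hhb.
    assert (Hkd : k = - Derive h 1) by reflexivity.
    assert (E5 : Derive h 1 * z = - (k * z)) by (rewrite Hkd; clear; ring).
    assert (E6 : k * z - z * (c * K / m) = z * rho) by (unfold rho; clear - Hm; field; lra).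
    assert (E7 : rho / 4 * z = z * rho / 4) by (clear; field).
    assert (H6 : z * rho > 0) by nra.
    split; lra.
  - intros x Hx. unfold g. destruct (Hzr x Hx) as [Hzr1 Hzr2]. rewrite Hzr1.
    assert (Hp0 := Hphi0 x Hx).
    assert (0 < Rpower (1 - U x) (r - 1)) by apply Rpower_pos.
    assert (A * ((1 - U x) * Rpower (1 - U x) (r - 1)) <= A * (1 - U x)); [|lra].
    apply Rmult_le_compat_l; [lra|]. assert (0 < 1 - U x) by lra. nra.
  - intros x Hx. lra.
  - intros x eps Hx He. destruct (liminf_z m p c gam h U phi w HS0 d x eps Hx He) as [y Hy].
    exists y. exact Hy.
Qed.

Lemma case2 m c gam a h U phi w : setup m 2 c gam h U phi w -> standing_h m a h ->
  0 < m -> 0 < c -> 0 <= gam ->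
  forall eps, 0 < eps -> exists d, 0 < d /\ forall x, 1 - d < U x < 1 ->
    Rabs (phi x - ((- (c + gam * m) + sqrt ((c + gam * m) ^ 2 + 4 * m * (- Derive h 1))) / 2)
                   * Rpower (1 - U x) 1)
    <= eps * (((- (c + gam * m) + sqrt ((c + gam * m) ^ 2 + 4 * m * (- Derive h 1))) / 2)
              * Rpower (1 - U x) 1).
Proof.
  intros HS Hh Hm Hc Hg.
  set (k := - Derive h 1).
  assert (Hk : 0 < k) by (unfold k; destruct (h_facts m a h Hh) as [_ [Hd _]]; lra).
  set (B := c + gam * m).
  assert (HB : 0 < B) by (unfold B; nra).
  set (S := sqrt (B ^ 2 + 4 * m * k)).
  assert (HS2 : S * S = B ^ 2 + 4 * m * k) by (unfold S; apply sqrt_sqrt; nra).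
  assert (HS0 : 0 <= S) by (unfold S; apply sqrt_pos).
  assert (HSB : B < S) by nra.
  set (C := (- B + S) / 2).
  assert (HC : 0 < C) by (unfold C; lra).
  assert (HCeq : C * C + (c + gam * m) * C - m * (- Derive h 1) = 0).
  { fold B. fold k. unfold C. nra. }
  apply (combine U phi C 1 HC).
  - intros x Hx. destruct HS as [_ [_ [_ [_ [_ [_ Hder]]]]]].
    destruct (Hder x Hx) as [_ [_ [Hw0 [_ [_ Hphiw]]]]].
    replace (2 - 1) with 1 in Hphiw by ring. rewrite spow1 in Hphiw by auto. lra.
  - intros eps He.
    destruct (upper2 m c gam a h U phi w C HS Hh Hm Hc Hg HC HCeq ((1 + eps) * C) ltac:(nra))
      as [d [Hd H]].
    exists d. split; auto. intros x Hx. specialize (H x Hx).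
    rewrite Rpower_1 by lra. lra.
  - intros eps He.
    destruct (lower2 m c gam a h U phi w C HS Hh Hm Hc Hg HC HCeq ((1 - eps) * C) ltac:(split; nra))
      as [d [Hd H]].
    exists d. split; auto. intros x Hx. specialize (H x Hx).
    rewrite Rpower_1 by lra. lra.
Qed.

Lemma case_lt2 m p c gam a h U phi w : setup m p c gam h U phi w -> standing_h m a h ->
  0 < m -> 1 < p -> p < 2 -> 0 < c -> 0 < gam ->
  forall eps, 0 < eps -> exists d, 0 < d /\ forall x, 1 - d < U x < 1 ->
    Rabs (phi x - ((- Derive h 1) / gam) * Rpower (1 - U x) 1)
    <= eps * (((- Derive h 1) / gam) * Rpower (1 - U x) 1).
Proof.
  intros HS Hh Hm Hp Hp2 Hc Hg.
  set (C := (- Derive h 1) / gam).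
  assert (HC : 0 < C) by (unfold C; apply Rdiv_lt_0_compat; [destruct (h_facts m a h Hh) as [_ [Hd _]]; lra|lra]).
  apply (combine U phi C 1 HC).
  - intros x Hx. destruct HS as [_ [_ [_ [_ [_ [_ Hder]]]]]].
    destruct (Hder x Hx) as [_ [_ [Hw0 [_ [_ Hphiw]]]]].
    rewrite Hphiw. destruct (Req_dec (w x) 0) as [->|Hw].
    + rewrite spow_nonpos; lra.
    + rewrite spow_pos by lra. left; apply Rpower_pos.
  - intros eps He.
    destruct (upper_lt2 m p c gam a h U phi w C HS Hh Hm Hp Hc Hg eq_refl ((1 + eps) * C) ltac:(nra))
      as [d [Hd H]].
    exists d. split; auto. intros x Hx. specialize (H x Hx).
    rewrite Rpower_1 by lra. lra.
  - intros eps He.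
    destruct (lower_lt2 m p c gam a h U phi w C HS Hh Hm Hp Hp2 Hc Hg eq_refl ((1 - eps) * C) ltac:(split; nra))
      as [d [Hd H]].
    exists d. split; auto. intros x Hx. specialize (H x Hx).
    rewrite Rpower_1 by lra. lra.
Qed.

Lemma case_gt2 m p c gam a h U phi w : setup m p c gam h U phi w -> standing_h m a h ->
  0 < m -> 2 < p -> 0 < c -> 0 <= gam ->
  forall eps, 0 < eps -> exists d, 0 < d /\ forall x, 1 - d < U x < 1 ->
    Rabs (phi x - Rpower (m * (- Derive h 1) / c) (p - 1) * Rpower (1 - U x) (p - 1))
    <= eps * (Rpower (m * (- Derive h 1) / c) (p - 1) * Rpower (1 - U x) (p - 1)).
Proof.
  intros HS Hh Hm Hp Hc Hg.
  set (C := Rpower (m * (- Derive h 1) / c) (p - 1)).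
  assert (HC : 0 < C) by apply Rpower_pos.
  apply (combine U phi C (p - 1) HC).
  - intros x Hx. destruct HS as [_ [_ [_ [_ [_ [_ Hder]]]]]].
    destruct (Hder x Hx) as [_ [_ [Hw0 [_ [_ Hphiw]]]]].
    rewrite Hphiw. destruct (Req_dec (w x) 0) as [->|Hw].
    + rewrite spow_nonpos; lra.
    + rewrite spow_pos by lra. left; apply Rpower_pos.
  - intros eps He.
    destruct (upper_gt2 m p c gam a h U phi w HS Hh Hm Hp Hc Hg ((1 + eps) * C) ltac:(fold C; nra))
      as [d [Hd H]].
    exists d. split; auto. intros x Hx. specialize (H x Hx). lra.
  - intros eps He.
    destruct (lower_gt2 m p c gam a h U phi w HS Hh Hm Hp Hc Hg ((1 - eps) * C) ltac:(fold C; split; nra))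
      as [d [Hd H]].
    exists d. split; auto. intros x Hx. specialize (H x Hx). lra.
Qed.

Lemma to_flux m p c gam h U C mu :
  setup m p c gam h U
    (fun x => - pflux p (Derive (fun y => spow (U y) m) x))
    (fun x => - Derive (fun y => spow (U y) m) x) ->
  (forall eps, 0 < eps -> exists d, 0 < d /\ forall x, 1 - d < U x < 1 ->
    Rabs (- pflux p (Derive (fun y => spow (U y) m) x) - C * Rpower (1 - U x) mu)
    <= eps * (C * Rpower (1 - U x) mu)) ->
  flux_asymp m p U C mu.
Proof.
  intros HS H eps He.
  destruct (H eps He) as [d [Hd Hd']].
  exists (Rmin d 1). split; [apply Rmin_glb_lt; lra|].
  intros x Hx. assert (Rmin d 1 <= d) by apply Rmin_l. assert (Rmin d 1 <= 1) by apply Rmin_r.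
  destruct HS as [_ [_ [_ [_ [_ [_ Hder]]]]]].
  destruct (Hder x ltac:(lra)) as [_ [_ [Hw0 [_ [_ Hphiw]]]]].
  cbv beta in Hw0, Hphiw. rewrite (Rabs_left1 (Derive (fun y => spow (U y) m) x)) by lra. rewrite <- Hphiw.
  apply Hd'. lra.
Qed.

Theorem mainTheorem10 :
  forall (m p a : R) (h : R -> R),
    0 < m -> 1 < p -> 1 < m * (p - 1) ->
    standing_h m a h ->
    exists gstar : R, 0 < gstar /\
      forall (gam c : R) (U : R -> R),
        0 <= gam < gstar -> 0 < c ->
        finite_wavefront m p gam h c U ->
        (2 < p ->
           flux_asymp m p U (Rpower (m * (- Derive h 1) / c) (p - 1)) (p - 1)) /\
        (p = 2 ->
           flux_asymp m p U
             ((- (c + gam * m)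
               + sqrt ((c + gam * m) ^ 2 + 4 * m * (- Derive h 1))) / 2) 1) /\
        (p < 2 -> 0 < gam ->
           flux_asymp m p U ((- Derive h 1) / gam) 1).
Proof.
  intros m p a h Hm Hp Hmp Hh.
  exists 1. split; [lra|].
  intros gam c U Hg Hc HW.
  assert (HS := wave_setup m p gam h c U Hm Hp HW).
  split; [|split].
  - intros Hp2. apply (to_flux m p c gam h U); auto.
    apply (case_gt2 m p c gam a h U _ _ HS Hh Hm Hp2 Hc ltac:(lra)).
  - intros Hp2. subst p. apply (to_flux m 2 c gam h U); auto.
    apply (case2 m c gam a h U _ _ HS Hh Hm Hc ltac:(lra)).
  - intros Hp2 Hg0. apply (to_flux m p c gam h U); auto.
    apply (case_lt2 m p c gam a h U _ _ HS Hh Hm Hp Hp2 Hc Hg0).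
Qed.
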